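(* Let $f=\frac{1}{m}\sum_{i=1}^m f^i$ where each $f^i:\mathbb{R}^n\to\mathbb{R}$ is differentiable. For $1\le k\le m$ let $G_k=\frac{1}{k}\sum_{j=1}^k\nabla f^{i_j}$ be the mini-batch estimator of size $k$, where $\{i_1,\dots,i_k\}$ is a $k$-element subset of $\{1,\dots,m\}$ chosen uniformly at random. Let $\|\cdot\|$ be any norm on $\mathbb{R}^n$ and fix $x\in\mathbb{R}^n$. Then $\mathbb{E}[\|G_k(x)\|]$ is non-increasing in $k$, and for $1\le k\le m-1$, $$\mathbb{E}[\|G_k(x)\|]\le\frac{m}{k}\|\nabla f(x)\|+\frac{m-k}{k}\,\mathbb{E}[\|G_{m-k}(x)\|].$$ *)

(* Defs.v *)
From HB Require Import structures.
From mathcomp Require Import all_boot all_order all_algebra.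
From mathcomp Require Import all_classical all_reals all_analysis.
Set Implicit Arguments. Unset Strict Implicit. Unset Printing Implicit Defensive.
Import Order.TTheory GRing.Theory Num.Theory.
Import numFieldNormedType.Exports.
Local Open Scope ring_scope.

Definition grad (R : realType) (n : nat) (f : 'rV[R]_n -> R) (x : 'rV[R]_n)
  : 'rV[R]_n := \row_(j < n) derive f x (delta_mx 0 j : 'rV[R]_n).

Definition is_norm (R : realType) (n : nat) (N : 'rV[R]_n -> R) : Prop :=
  [/\ forall u v, N (u + v) <= N u + N v,
      forall (a : R) u, N (a *: u) = `|a| * N u
    & forall u, N u = 0 -> u = 0].

Definition favg (R : realType) (n m : nat) (f : 'I_m -> 'rV[R]_n -> R)
  : 'rV[R]_n -> R := fun y => (m%:R)^-1 * \sum_(i < m) f i y.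

(* E[ N (G_k(x)) ], with G_k = (1/k) sum_{i in S} grad f^i and S a uniformly
   random k-element subset of {1..m}. *)
Definition EG (R : realType) (n m : nat) (f : 'I_m -> 'rV[R]_n -> R)
  (N : 'rV[R]_n -> R) (x : 'rV[R]_n) (k : nat) : R :=
  ('C(m, k)%:R)^-1 *
  \sum_(S : {set 'I_m} | #|S| == k)
     N ((k%:R)^-1 *: \sum_(i in S) grad (f i) x).

(* Main.v *)
Require Import Defs.
From HB Require Import structures.
From mathcomp Require Import all_boot all_order all_algebra.
From mathcomp Require Import all_classical all_reals all_analysis.
From mathcomp Require Import zify.
Import Order.TTheory GRing.Theory Num.Theory.
Import numFieldNormedType.Exports.
Local Open Scope ring_scope.

From mathcomp Require Import zify.


Lemma grad_favg (R : realType) (n m : nat) (f : 'I_m -> 'rV[R]_n -> R) x :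
  (forall i y, differentiable (f i) y) ->
  grad (favg f) x = (m%:R)^-1 *: \sum_(i < m) grad (f i) x.
Proof.
move=> df; apply/rowP => j; rewrite !mxE summxE.
have -> : favg f = (m%:R)^-1 \*: (\sum_(i < m) f i).
  by apply/funext => y; rewrite /favg /= fct_sumE.
rewrite deriveZ; last by apply: derivable_sum => i; apply: diff_derivable.
rewrite derive_sum; last by move=> i; apply: diff_derivable.
by congr (_ * _); apply: eq_bigr => i _; rewrite mxE.
Qed.
Lemma norm0 (R : realType) n (N : 'rV[R]_n -> R) : is_norm N -> N 0 = 0.
Proof. by case=> _ hZ _; rewrite -(scale0r (0 : 'rV[R]_n)) hZ normr0 mul0r. Qed.

Lemma normNv (R : realType) n (N : 'rV[R]_n -> R) u : is_norm N -> N (- u) = N u.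
Proof. by case=> _ hZ _; rewrite -scaleN1r hZ normrN normr1 mul1r. Qed.

Lemma normZp (R : realType) n (N : 'rV[R]_n -> R) (a : R) u : is_norm N -> 0 <= a ->
  N (a *: u) = a * N u.
Proof. by case=> _ hZ _ ha; rewrite hZ ger0_norm. Qed.

Lemma norm_sum (R : realType) n (N : 'rV[R]_n -> R) (I : Type) (r : seq I) (P : pred I) F :
  is_norm N -> N (\sum_(i <- r | P i) F i) <= \sum_(i <- r | P i) N (F i).
Proof.
move=> hN; elim/big_rec2: _ => [|i y1 y2 _ h]; first by rewrite norm0.
case: hN => hT _ _; apply: le_trans (hT _ _) _; by rewrite lerD2l.
Qed.

Lemma step_a (R : realType) n m (N : 'rV[R]_n -> R) (g : 'I_m -> 'rV[R]_n) k (T : {set 'I_m}) :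
  is_norm N -> #|T| = k.+1 -> (0 < k)%N ->
  N (\sum_(i in T) g i) <= \sum_(j in T) N (k%:R^-1 *: \sum_(i in T :\ j) g i).
Proof.
move=> hN hT k0.
have -> : \sum_(i in T) g i = \sum_(j in T) k%:R^-1 *: \sum_(i in T :\ j) g i.
  have e : forall j, j \in T -> \sum_(i in T :\ j) g i = \sum_(i in T) g i - g j.
    move=> j jT; rewrite (bigD1 j jT) /= addrC addrK.
    by apply: eq_bigl => i; rewrite in_setD1 andbC.
  rewrite (eq_bigr _ (fun j jT => congr1 _ (e j jT))) -scaler_sumr sumrB sumr_const hT.
  rewrite mulrS addrAC subrr add0r -(scaler_nat k (\sum_(i in T) g i)) scalerA mulVf ?scale1r //.
  by rewrite pnatr_eq0 -lt0n.
exact: norm_sum.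
Qed.
Lemma double_count (R : realType) m (F : {set 'I_m} -> R) k :
  \sum_(T : {set 'I_m} | #|T| == k.+1) \sum_(j in T) F (T :\ j)
  = (m - k)%:R * \sum_(S : {set 'I_m} | #|S| == k) F S.
Proof.
rewrite mulr_sumr.
have -> : \sum_(S : {set 'I_m} | #|S| == k) (m - k)%:R * F S
   = \sum_(S : {set 'I_m} | #|S| == k) \sum_(j in ~: S) F S.
  apply: eq_bigr => S /eqP hS; rewrite sumr_const; have := cardsC S; rewrite card_ord hS => e; rewrite -{1}e addKn.
  by rewrite mulr_natl.
rewrite (exchange_big_dep predT) //= [RHS](exchange_big_dep predT) //=.
apply: eq_bigr => j _.
rewrite (reindex_onto (fun S => j |: S) (fun T => T :\ j)); last first.
  by move=> T /andP[_ jT]; rewrite finset.setD1K.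
apply: eq_big => S.
  case jS: (j \in S).
    rewrite finset.in_setC jS andbF /=.
    apply/negbTE; rewrite negb_and; apply/orP; right.
    rewrite finset.setDUl finset.setDv finset.set0U; apply/negP => /eqP e.
    by move: jS; rewrite -e finset.setD11.
  rewrite finset.in_setC jS andbT finset.setU11 andbT finset.cardsU1 jS.
  by rewrite finset.setU1K ?jS // eqxx andbT.
by move=> /andP[_ /eqP ->].
Qed.
Lemma part1 (R : realType) (n m : nat) (f : 'I_m -> 'rV[R]_n -> R)
  (N : 'rV[R]_n -> R) (x : 'rV[R]_n) k :
  is_norm N -> (1 <= k)%N -> (k < m)%N -> EG f N x k.+1 <= EG f N x k.
Proof.
move=> hN k1 km; rewrite /EG.
have e1 : \sum_(T : {set 'I_m} | #|T| == k.+1) N (k.+1%:R^-1 *: \sum_(i in T) grad (f i) x)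
   = k.+1%:R^-1 * \sum_(T : {set 'I_m} | #|T| == k.+1) N (\sum_(i in T) grad (f i) x).
  by rewrite mulr_sumr; apply: eq_bigr => T _; apply: normZp => //; rewrite invr_ge0 ler0n.
have e2 : \sum_(T : {set 'I_m} | #|T| == k.+1) N (\sum_(i in T) grad (f i) x)
   <= \sum_(T : {set 'I_m} | #|T| == k.+1) \sum_(j in T)
        N (k%:R^-1 *: \sum_(i in T :\ j) grad (f i) x).
  by apply: ler_sum => T /eqP hT; apply: step_a.
rewrite (@double_count _ _ (fun S => N (k%:R^-1 *: \sum_(i in S) grad (f i) x))) in e2.
have key : ('C(m, k.+1)%:R : R)^-1 * k.+1%:R^-1 * (m - k)%:R = ('C(m, k)%:R)^-1.
  have h := congr1 (fun t => t%:R : R) (mul_bin_left m k); rewrite /= !natrM in h.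
  have c0 : ((m - k)%:R : R) != 0 by rewrite pnatr_eq0 subn_eq0 -ltnNge.
  by rewrite -invfM (mulrC _ (k.+1%:R)) h invfM mulrAC mulVf ?mul1r.
rewrite e1 mulrA; apply: le_trans (ler_wpM2l _ e2) _.
  by rewrite mulr_ge0 // invr_ge0 ler0n.
by rewrite mulrA key.
Qed.
Lemma part2 (R : realType) (n m : nat) (f : 'I_m -> 'rV[R]_n -> R)
  (N : 'rV[R]_n -> R) (x : 'rV[R]_n) k :
  (forall i y, differentiable (f i) y) ->
  is_norm N -> (1 <= k)%N -> (k <= m - 1)%N ->
     EG f N x k <= (m%:R / k%:R) * N (grad (favg f) x)
                   + ((m - k)%:R / k%:R) * EG f N x (m - k).
Proof.
move=> df hN k1 km1; rewrite grad_favg //.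
have km : (k < m)%N by lia.
have m0 : (m%:R : R) != 0 by rewrite pnatr_eq0; lia.
have k0 : (k%:R : R) != 0 by rewrite pnatr_eq0; lia.
have c0 : ((m - k)%:R : R) != 0 by rewrite pnatr_eq0; lia.
set G := \sum_(i < m) grad (f i) x.
set a := m%:R / k%:R; set b := (m - k)%:R / k%:R.
have a0 : 0 <= a by rewrite divr_ge0 ?ler0n.
have b0 : 0 <= b by rewrite divr_ge0 ?ler0n.
set H := fun S : {set 'I_m} => N ((m - k)%:R^-1 *: \sum_(i in S) grad (f i) x).
have pw : forall S : {set 'I_m}, #|S| == k ->
    N (k%:R^-1 *: \sum_(i in S) grad (f i) x) <= a * N (m%:R^-1 *: G) + b * H (~: S).
  move=> S _.
  have -> : k%:R^-1 *: \sum_(i in S) grad (f i) x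
      = a *: (m%:R^-1 *: G) - b *: ((m - k)%:R^-1 *: \sum_(i in ~: S) grad (f i) x).
    have ea : a * m%:R^-1 = k%:R^-1 by rewrite /a mulrAC mulfV ?mul1r.
    have eb : b * (m - k)%:R^-1 = k%:R^-1 by rewrite /b mulrAC mulfV ?mul1r.
    rewrite !scalerA ea eb -scalerBr; congr (_ *: _).
    have -> : \sum_(i in ~: S) grad (f i) x = \sum_(i < m | i \notin S) grad (f i) x.
      by apply: eq_bigl => i; rewrite finset.in_setC.
    by rewrite /G [\sum_(i < m) _](bigID (fun i => i \in S)) /= addrK.
  case: (hN) => hT _ _; apply: le_trans (hT _ _) _.
  by rewrite /H normNv // !normZp.
rewrite /EG.
apply: le_trans (ler_wpM2l _ (ler_sum _ pw)) _; first by rewrite invr_ge0 ler0n.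
rewrite big_split /=.
have -> : \sum_(S : {set 'I_m} | #|S| == k) a * N (m%:R^-1 *: G)
    = a * N (m%:R^-1 *: G) *+ 'C(m, k).
  rewrite (eq_bigl (fun S => S \in [set S : {set 'I_m} | #|S| == k])); last first.
    by move=> S; rewrite finset.inE.
  by rewrite sumr_const card_draws card_ord.
have -> : \sum_(S : {set 'I_m} | #|S| == k) b * H (~: S)
    = b * \sum_(S : {set 'I_m} | #|S| == (m - k)%N) H S.
  rewrite -mulr_sumr; congr (_ * _).
  rewrite [RHS](reindex_inj (@finset.setC_inj _)) /=.
  apply: eq_bigl => S; have := cardsC S; rewrite card_ord => e.
  apply/eqP/eqP; move: e; move: #|~: S| #|S| => u v.
    by move=> e <-; rewrite -e addKn.
  move=> e hu; apply/eqP; by rewrite -(eqn_add2r u) e hu subnKC ?(ltnW km).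
have C0 : ('C(m, k)%:R : R) != 0 by rewrite pnatr_eq0 -lt0n bin_gt0 ltnW.
rewrite bin_sub ?(ltnW km) // mulrDr -(mulr_natr (a * N (m%:R^-1 *: G))) mulrCA mulVf // mulr1.
by rewrite [X in _ + X]mulrCA.
Qed.

Theorem theorem4p6 (R : realType) (n m : nat) (f : 'I_m -> 'rV[R]_n -> R)
  (N : 'rV[R]_n -> R) (x : 'rV[R]_n) :
  (forall i y, differentiable (f i) y) ->
  is_norm N ->
  (forall k : nat, (1 <= k)%N -> (k < m)%N -> EG f N x k.+1 <= EG f N x k) /\
  (forall k : nat, (1 <= k)%N -> (k <= m - 1)%N ->
     EG f N x k <= (m%:R / k%:R) * N (grad (favg f) x)
                   + ((m - k)%:R / k%:R) * EG f N x (m - k)).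
Proof.
move=> df hN; split => k k1 km.
  exact: part1.
exact: part2.
Qed.
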